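(* Let $A\in\mathbb{R}^{m\times n}$, $L\in\mathbb{R}^{p\times n}$ with $\mathcal{N}(A)\cap\mathcal{N}(L)=\{0\}$, let $b\in\mathbb{R}^m$ and $\mu>0$. Let $\tilde V_1\in\mathbb{R}^{n\times l}$ have orthonormal columns, and set $\widehat A = A\tilde V_1$, $\widehat L = L\tilde V_1$. Suppose the matrix pair $(\widehat A,\widehat L)$ has a generalized SVD $$\widehat A = \widehat U \widehat C \widehat G^{-1},\qquad \widehat L = \widehat V\widehat S\widehat G^{-1},$$ where $\widehat U\in\mathbb{R}^{m\times l}$ and $\widehat V\in\mathbb{R}^{p\times l}$ have orthonormal columns, $\widehat C,\widehat S\in\mathbb{R}^{l\times l}$ are diagonal with nonnegative entries and $\widehat C^T\widehat C+\widehat S^T\widehat S=I$, and $\widehat G\in\mathbb{R}^{l\times l}$ is nonsingular. Define $$\widetilde A = A\tilde V_1\tilde V_1^T,\qquad \widetilde L = L\tilde V_1\tilde V_1^T.$$ Then the vector $$\tilde V_1 \widehat G(\widehat C^T\widehat C+\mu^2\widehat S^T\widehat S)^{-1}\widehat C^T\widehat U^T b$$ is the least-squares solution with minimum norm of $$\min_{x\in\mathbb{R}^n}\|\widetilde A x - b\|^2+\mu^2\|\widetilde L x\|^2,$$ i.e. the minimizer of this problem having minimal Euclidean norm.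
   Context: All norms are Euclidean 2-norms; $\mathcal{N}(M)$ denotes the null space of a matrix $M$. In the paper, $\tilde V_1$ is typically obtained as the approximate right singular vectors of $A$ from a randomized SVD, but the statement holds for any $\tilde V_1$ with orthonormal columns. *)

(* Defs.v *)
From HB Require Import structures.
From mathcomp Require Import all_boot all_order all_algebra.
Set Implicit Arguments. Unset Strict Implicit. Unset Printing Implicit Defensive.
Import Order.TTheory GRing.Theory Num.Theory.
Local Open Scope ring_scope.

Definition sqnorm (R : realFieldType) (k : nat) (x : 'cV[R]_k) : R :=
  \sum_(i < k) (x i 0) ^+ 2.

Definition orthonormal_cols (R : realFieldType) (r c : nat) (Q : 'M[R]_(r, c)) : Prop :=
  Q^T *m Q = 1%:M.

Definition nonneg_diag (R : realFieldType) (k : nat) (D : 'M[R]_k) : Prop :=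
  is_diag_mx D /\ forall i, 0 <= D i i.

Definition tik_obj (R : realFieldType) (m n p : nat)
  (A : 'M[R]_(m, n)) (L : 'M[R]_(p, n)) (b : 'cV[R]_m) (mu : R) (x : 'cV[R]_n) : R :=
  sqnorm (A *m x - b) + mu ^+ 2 * sqnorm (L *m x).

Definition min_norm_minimizer (R : realFieldType) (n : nat)
  (J : 'cV[R]_n -> R) (x0 : 'cV[R]_n) : Prop :=
  (forall x, J x0 <= J x) /\
  (forall x, (forall y, J x <= J y) -> sqnorm x0 <= sqnorm x).

(* Main.v *)
Require Import Defs.
From HB Require Import structures.
From mathcomp Require Import all_boot all_order all_algebra.
From mathcomp Require Import ring lra.
Import Order.TTheory GRing.Theory Num.Theory.
Set Implicit Arguments. Unset Strict Implicit.
Local Open Scope ring_scope.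

Section Aux.
Variable R : realFieldType.

Definition dot (k : nat) (u v : 'cV[R]_k) : R := (u^T *m v) 0 0.

Lemma sqnorm_dot k (u : 'cV[R]_k) : sqnorm u = dot u u.
Proof. rewrite /sqnorm /dot mxE; apply: eq_bigr => i _; rewrite !mxE expr2. by []. Qed.

Lemma dotC k (u v : 'cV[R]_k) : dot u v = dot v u.
Proof.
rewrite /dot; have -> : (v^T *m u) 0 0 = ((v^T *m u)^T) 0 0 by rewrite !mxE.
by rewrite trmx_mul trmxK.
Qed.

Lemma dotMl k j (A : 'M[R]_(j, k)) u v : dot (A *m u) v = dot u (A^T *m v).
Proof. by rewrite /dot trmx_mul !mulmxA. Qed.

Lemma dotMr k j (A : 'M[R]_(j, k)) u v : dot u (A *m v) = dot (A^T *m u) v.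
Proof. by rewrite dotC dotMl dotC. Qed.

Lemma dotDl k (u v w : 'cV[R]_k) : dot (u + v) w = dot u w + dot v w.
Proof. by rewrite /dot linearD /= mulmxDl mxE. Qed.

Lemma dotDr k (u v w : 'cV[R]_k) : dot w (u + v) = dot w u + dot w v.
Proof. by rewrite /dot mulmxDr mxE. Qed.

Lemma dotNl k (u w : 'cV[R]_k) : dot (- u) w = - dot u w.
Proof. by rewrite /dot linearN /= mulNmx mxE. Qed.

Lemma dotZl k a (u w : 'cV[R]_k) : dot (a *: u) w = a * dot u w.
Proof. by rewrite /dot linearZ /= -scalemxAl mxE. Qed.

Lemma dotZr k a (u w : 'cV[R]_k) : dot w (a *: u) = a * dot w u.
Proof. by rewrite dotC dotZl dotC. Qed.

Lemma dot0l k (w : 'cV[R]_k) : dot 0 w = 0.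
Proof. by rewrite /dot linear0 mul0mx mxE. Qed.

Lemma sqnorm_ge0 k (u : 'cV[R]_k) : 0 <= sqnorm u.
Proof. by apply: sumr_ge0 => i _; apply: sqr_ge0. Qed.

Lemma sqnorm_eq0 k (u : 'cV[R]_k) : sqnorm u = 0 -> u = 0.
Proof.
move=> h; apply/matrixP => i j; rewrite ord1 mxE.
have := psumr_eq0P (fun i _ => sqr_ge0 (u i 0)) h (i := i) isT.
by move/eqP; rewrite sqrf_eq0 => /eqP.
Qed.

Lemma sqnormD k (u v : 'cV[R]_k) :
  sqnorm (u + v) = sqnorm u + 2 * dot u v + sqnorm v.
Proof. rewrite !sqnorm_dot dotDl !dotDr (dotC v u); ring. Qed.

Lemma dot_orth r k (Q : 'M[R]_(r, k)) u v :
  orthonormal_cols Q -> dot (Q *m u) (Q *m v) = dot u v.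
Proof. by move=> hQ; rewrite dotMl mulmxA hQ mul1mx. Qed.

End Aux.
Unset Implicit Arguments.

Theorem lemma1 (R : realFieldType) (m n p l : nat)
  (A : 'M[R]_(m, n)) (L : 'M[R]_(p, n)) (b : 'cV[R]_m) (mu : R)
  (V1 : 'M[R]_(n, l))
  (U : 'M[R]_(m, l)) (V : 'M[R]_(p, l)) (C S G : 'M[R]_l) :
  (forall x : 'cV[R]_n, A *m x = 0 -> L *m x = 0 -> x = 0) ->
  0 < mu ->
  orthonormal_cols V1 ->
  orthonormal_cols U -> orthonormal_cols V ->
  nonneg_diag C -> nonneg_diag S ->
  C^T *m C + S^T *m S = 1%:M ->
  G \in unitmx ->
  A *m V1 = U *m C *m invmx G ->
  L *m V1 = V *m S *m invmx G ->
  min_norm_minimizer (tik_obj (A *m V1 *m V1^T) (L *m V1 *m V1^T) b mu)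
    (V1 *m G *m invmx (C^T *m C + (mu ^+ 2) *: (S^T *m S)) *m C^T *m U^T *m b).
Proof.
move=> _ mu0 hV1 hU hV _ _ hCS hG hA hL.
have mu20 : 0 < mu ^+ 2 by rewrite exprn_gt0.
set M := C^T *m C + (mu ^+ 2) *: (S^T *m S).
have quad : forall d : 'cV[R]_l,
    dot d (M *m d) = sqnorm (C *m d) + mu ^+ 2 * sqnorm (S *m d).
  move=> d; rewrite /M mulmxDl dotDr -scalemxAl dotZr.
  by rewrite -!mulmxA [dot d (C^T *m _)]dotMr [dot d (S^T *m _)]dotMr !trmxK !sqnorm_dot.
have key : forall d : 'cV[R]_l,
    sqnorm (C *m d) + mu ^+ 2 * sqnorm (S *m d) <= 0 -> d = 0.
  move=> d h.
  have h1 := sqnorm_ge0 (C *m d); have h2 := sqnorm_ge0 (S *m d).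
  have h2' : 0 <= mu ^+ 2 * sqnorm (S *m d) by rewrite mulr_ge0 // ltW.
  have e1 : sqnorm (C *m d) = 0 by lra.
  have e2 : mu ^+ 2 * sqnorm (S *m d) = 0 by lra.
  move: e2 => /eqP; rewrite mulf_eq0 (negbTE (lt0r_neq0 mu20)) /= => /eqP e2.
  have c0 := sqnorm_eq0 e1; have s0 := sqnorm_eq0 e2.
  by rewrite -[d]mul1mx -hCS mulmxDl -!mulmxA c0 s0 !mulmx0 addr0.
have Mu : M \in unitmx.
  rewrite unitmxE unitfE; apply/negP => /det0P [v vn0 vM].
  have : dot v^T (M *m v^T) = 0.
    by rewrite /dot trmxK mulmxA vM mul0mx mxE.
  rewrite quad => h.
  have := key v^T; rewrite h lexx => /(_ isT) /eqP.
  by rewrite -(inj_eq (@trmx_inj _ _ _)) trmxK linear0 (negbTE vn0).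
set z0 := invmx M *m (C^T *m U^T *m b).
have hz0 : M *m z0 = C^T *m U^T *m b by rewrite /z0 mulKVmx.
set x0 := V1 *m (G *m z0).
have -> : V1 *m G *m invmx M *m C^T *m U^T *m b = x0.
  by rewrite /x0 /z0 !mulmxA.
set J := tik_obj _ _ _ _.
pose zx (x : 'cV[R]_n) := invmx G *m (V1^T *m x).
have Jx : forall x, J x = sqnorm (U *m C *m zx x - b)
                         + mu ^+ 2 * sqnorm (V *m S *m zx x).
  by move=> x; rewrite /J /tik_obj hA hL /zx !mulmxA.
have V1x0 : V1^T *m x0 = G *m z0 by rewrite /x0 mulmxA hV1 mul1mx.
have zx0 : zx x0 = z0 by rewrite /zx V1x0 mulKmx.
have expand : forall x, J x = J x0 +
    (sqnorm (C *m (zx x - z0)) + mu ^+ 2 * sqnorm (S *m (zx x - z0))).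
  move=> x; rewrite !Jx zx0.
  set d := zx x - z0.
  have -> : zx x = z0 + d by rewrite /d addrC subrK.
  have -> : U *m C *m (z0 + d) - b = (U *m C *m z0 - b) + U *m (C *m d).
    by rewrite mulmxDr addrAC -[U *m C *m d]mulmxA.
  have -> : V *m S *m (z0 + d) = V *m S *m z0 + V *m (S *m d).
    by rewrite mulmxDr -[V *m S *m d]mulmxA.
  have cross : dot (U *m C *m z0 - b) (U *m (C *m d))
      + mu ^+ 2 * dot (V *m S *m z0) (V *m (S *m d)) = 0.
    rewrite dotDl dotNl -!mulmxA (dot_orth _ _ hU) (dot_orth _ _ hV).
    rewrite [dot (C *m z0) _]dotMr [dot (S *m z0) _]dotMr [dot b _]dotMr.
    rewrite [dot (U^T *m b) _]dotMr.
    have e : dot (M *m z0 - C^T *m U^T *m b) d = 0 by rewrite hz0 subrr dot0l.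
    move: e; rewrite /M mulmxDl -scalemxAl dotDl dotDl dotZl dotNl -!mulmxA.
    lra.
  rewrite !sqnormD.
  rewrite [sqnorm (U *m _)]sqnorm_dot [sqnorm (V *m _)]sqnorm_dot (dot_orth _ _ hU) (dot_orth _ _ hV).
  rewrite -!sqnorm_dot.
  lra.
split.
  move=> x; rewrite (expand x).
  have := sqnorm_ge0 (C *m (zx x - z0)); have := sqnorm_ge0 (S *m (zx x - z0)).
  move=> h1 h2; have : 0 <= mu ^+ 2 * sqnorm (S *m (zx x - z0)).
    by rewrite mulr_ge0 // ltW.
  lra.
move=> x hx.
have := hx x0; rewrite expand => h.
have : sqnorm (C *m (zx x - z0)) + mu ^+ 2 * sqnorm (S *m (zx x - z0)) <= 0
  by lra.
move/key/eqP; rewrite subr_eq0 => /eqP e.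
have V1x : V1^T *m x = G *m z0.
  by rewrite -e /zx mulKVmx.
have -> : x = x0 + (x - x0) by rewrite addrC subrK.
rewrite sqnormD.
have -> : dot x0 (x - x0) = 0.
  rewrite /x0 dotMl mulmxBr V1x V1x0 subrr.
  by rewrite dotC dot0l.
have := sqnorm_ge0 (x - x0); lra.
Qed.
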